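(* Let $U\colon[0,1]^2\to[0,1]$ be a uninorm with neutral element $e\in(0,1)$, $U\in\mathcal U$, and let $c\in[0,1]$ be an idempotent element of $U$. If $a,b$ are idempotent elements of $U$ such that $U(x,x)\ne x$ for all $x\in(a,b)$, then either $U(c,x)=\min(x,c)$ for all $x\in(a,b)$, or $U(c,x)=\max(x,c)$ for all $x\in(a,b)$. Moreover, if $U$ on $[a,b]^2$ is a nilpotent t-norm (resp. nilpotent t-conorm), then either $U(c,x)=\min(x,c)$ for all $x\in[a,b)$ (resp. $x\in(a,b]$) or $U(c,x)=\max(x,c)$ for all $x\in[a,b)$ (resp. $x\in(a,b]$).
   Context: A uninorm is a commutative, associative binary operation on $[0,1]$, non-decreasing in each variable, with a neutral element $e$. Underlying t-norm $T_U(x,y)=U(ex,ey)/e$, underlying t-conorm $C_U(x,y)=(U(e+(1-e)x,e+(1-e)y)-e)/(1-e)$; $\mathcal U$ is the class of uninorms for which both are continuous. An idempotent element is $x$ with $U(x,x)=x$. ''$U$ on $[a,b]^2$ is a nilpotent t-norm (t-conorm)'' means that the restriction of $U$ to $[a,b]^2$, transported to $[0,1]^2$ by the increasing linear bijection $[a,b]\to[0,1]$, is a nilpotent t-norm (t-conorm), i.e. a continuous t-norm with only idempotents $0,1$ and $T(x,y)=0$ for some $x,y\in(0,1)$ (resp. a continuous t-conorm with only idempotents $0,1$ and $S(x,y)=1$ for some $x,y\in(0,1)$). *)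

(* Defs.v *)
From Stdlib Require Import Reals Lra.
Open Scope R_scope.

Definition in01 (x : R) : Prop := 0 <= x <= 1.

Definition is_uninorm (U : R -> R -> R) (e : R) : Prop :=
  in01 e /\
  (forall x y, in01 x -> in01 y -> in01 (U x y)) /\
  (forall x y, in01 x -> in01 y -> U x y = U y x) /\
  (forall x y z, in01 x -> in01 y -> in01 z -> U x (U y z) = U (U x y) z) /\
  (forall x1 x2 y, in01 x1 -> in01 x2 -> in01 y -> x1 <= x2 -> U x1 y <= U x2 y) /\
  (forall x, in01 x -> U e x = x).

Definition is_tnorm (T : R -> R -> R) : Prop := is_uninorm T 1.
Definition is_tconorm (S : R -> R -> R) : Prop := is_uninorm S 0.

Definition continuous01 (F : R -> R -> R) : Prop :=
  forall x y, in01 x -> in01 y -> forall eps, 0 < eps -> exists delta, 0 < delta /\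
    forall x' y', in01 x' -> in01 y' -> Rabs (x' - x) < delta -> Rabs (y' - y) < delta ->
      Rabs (F x' y' - F x y) < eps.

Definition underlying_tnorm (U : R -> R -> R) (e : R) : R -> R -> R :=
  fun x y => U (e * x) (e * y) / e.
Definition underlying_tconorm (U : R -> R -> R) (e : R) : R -> R -> R :=
  fun x y => (U (e + (1 - e) * x) (e + (1 - e) * y) - e) / (1 - e).

Definition in_classU (U : R -> R -> R) (e : R) : Prop :=
  continuous01 (underlying_tnorm U e) /\ continuous01 (underlying_tconorm U e).

Definition idempotent (U : R -> R -> R) (x : R) : Prop := in01 x /\ U x x = x.

(* Restriction of U to [a,b]^2 transported to [0,1]^2 by the increasing linear bijection. *)
Definition transport (U : R -> R -> R) (a b : R) : R -> R -> R :=
  fun x y => (U (a + (b - a) * x) (a + (b - a) * y) - a) / (b - a).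

Definition is_nilpotent_tnorm (T : R -> R -> R) : Prop :=
  is_tnorm T /\ continuous01 T /\
  (forall x, in01 x -> T x x = x -> x = 0 \/ x = 1) /\
  (exists x y, 0 < x < 1 /\ 0 < y < 1 /\ T x y = 0).

Definition is_nilpotent_tconorm (S : R -> R -> R) : Prop :=
  is_tconorm S /\ continuous01 S /\
  (forall x, in01 x -> S x x = x -> x = 0 \/ x = 1) /\
  (exists x y, 0 < x < 1 /\ 0 < y < 1 /\ S x y = 1).

Definition nilpotent_tnorm_on (U : R -> R -> R) (a b : R) : Prop :=
  a < b /\ is_nilpotent_tnorm (transport U a b).
Definition nilpotent_tconorm_on (U : R -> R -> R) (a b : R) : Prop :=
  a < b /\ is_nilpotent_tconorm (transport U a b).

(* Main.v *)
Require Import Defs.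
From Stdlib Require Import Reals Lra Psatz Classical.
Open Scope R_scope.
Definition clamp (lo hi z : R) := Rmax lo (Rmin hi z).

Lemma clamp_in lo hi z : lo <= hi -> lo <= clamp lo hi z <= hi.
Proof. intros H. unfold clamp. unfold Rmax, Rmin.
  repeat destruct Rle_dec; lra. Qed.

Lemma clamp_id lo hi z : lo <= z <= hi -> clamp lo hi z = z.
Proof. intros H. unfold clamp, Rmax, Rmin. repeat destruct Rle_dec; lra. Qed.

Lemma clamp_lip lo hi y x : lo <= hi -> Rabs (clamp lo hi y - clamp lo hi x) <= Rabs (y - x).
Proof. intros H. unfold clamp, Rmax, Rmin. unfold Rabs.
  repeat destruct Rle_dec; repeat destruct Rcase_abs; lra. Qed.

Lemma ivt_loc (f : R->R) lo hi v : lo <= hi ->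
  (forall p, lo<=p<=hi -> forall eps, 0<eps -> exists d, 0<d /\
     forall p', lo<=p'<=hi -> Rabs(p'-p)<d -> Rabs(f p' - f p)<eps) ->
  f lo <= v <= f hi -> exists z, lo<=z<=hi /\ f z = v.
Proof.
  intros Hlh Hc Hv.
  set (g := fun z => f (clamp lo hi z) - v).
  assert (Hg : continuity g).
  { intros x eps Heps.
    destruct (Hc (clamp lo hi x) (clamp_in lo hi x Hlh) eps Heps) as [d [Hd Hd']].
    exists d; split; [lra|]. intros y [_ Hy]. simpl in Hy |- *. unfold Rdist in *.
    unfold g. replace (f (clamp lo hi y) - v - (f (clamp lo hi x) - v)) with
      (f (clamp lo hi y) - f (clamp lo hi x)) by ring.
    apply Hd'. apply clamp_in; auto.
    pose proof (clamp_lip lo hi y x Hlh). lra. }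
  destruct (IVT_cor g lo hi Hg Hlh) as [z [Hz Hgz]].
  { unfold g. rewrite !clamp_id by lra.
    nra. }
  exists z. split; auto. unfold g in Hgz. rewrite clamp_id in Hgz by lra. lra.
Qed.

Definition LC (U:R->R->R) (lo hi:R) := forall p q, lo<=p<=hi -> lo<=q<=hi ->
  forall eps, 0<eps -> exists d, 0<d /\ forall p' q', lo<=p'<=hi -> lo<=q'<=hi ->
  Rabs (p'-p)<d -> Rabs(q'-q)<d -> Rabs (U p' q' - U p q) < eps.

Lemma LC_sec U lo hi y : lo <= y <= hi -> LC U lo hi ->
  forall p, lo<=p<=hi -> forall eps, 0<eps -> exists d, 0<d /\
     forall p', lo<=p'<=hi -> Rabs(p'-p)<d -> Rabs(U y p' - U y p)<eps.
Proof.
  intros Hy H p Hp eps He. destruct (H y p Hy Hp eps He) as [d [Hd Hd']].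
  exists d; split; auto. intros p' Hp' Hpp. apply Hd'; auto.
  replace (y-y) with 0 by ring. rewrite Rabs_R0; lra.
Qed.

Lemma LC_diag U lo hi : LC U lo hi ->
  forall p, lo<=p<=hi -> forall eps, 0<eps -> exists d, 0<d /\
     forall p', lo<=p'<=hi -> Rabs(p'-p)<d -> Rabs(U p' p' - U p p)<eps.
Proof.
  intros H p Hp eps He. destruct (H p p Hp Hp eps He) as [d [Hd Hd']].
  exists d; split; auto.
Qed.

Ltac i01 := unfold in01 in *; lra.

Lemma mono2 U e : is_uninorm U e -> forall x y1 y2, in01 x -> in01 y1 -> in01 y2 -> y1 <= y2 -> U x y1 <= U x y2.
Proof. intros (He&Hc&Hcom&Has&Hm&Hn) x y1 y2 ? ? ? ?.
  rewrite (Hcom x y1), (Hcom x y2) by auto. apply Hm; auto. Qed.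

Lemma mono1 U e : is_uninorm U e -> forall x1 x2 y, in01 x1 -> in01 x2 -> in01 y -> x1 <= x2 -> U x1 y <= U x2 y.
Proof. intros (He&Hc&Hcom&Has&Hm&Hn). auto. Qed.

Lemma T1 U e c x : is_uninorm U e -> 0 < e < 1 -> LC U 0 e -> idempotent U c -> c <= e ->
  0 <= x <= e -> U c x = Rmin x c.
Proof.
  intros HU He HL [Hc0 Hcc] Hce Hx.
  pose proof HU as (He0&Hcl&Hcom&Has&Hm&Hn).
  destruct (Rle_dec x c) as [Hxc|Hxc].
  - rewrite Rmin_left by lra.
    assert (H0 : U c 0 = 0).
    { assert (U c 0 <= U e 0) by (apply (mono1 U e); auto; i01).
      rewrite Hn in H by i01. pose proof (Hcl c 0 Hc0 ltac:(i01)). i01. }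
    assert (H1 : U c e = c) by (rewrite Hcom, Hn; auto; i01).
    destruct (ivt_loc (U c) 0 e x ltac:(lra) (LC_sec U 0 e c ltac:(i01) HL)) as [z [Hz Hz']].
    { rewrite H0, H1. lra. }
    rewrite <- Hz', Has by i01. rewrite Hcc. auto.
  - rewrite Rmin_right by lra.
    assert (U c c <= U c x) by (apply (mono2 U e); auto; i01).
    assert (U c x <= U c e) by (apply (mono2 U e); auto; i01).
    rewrite (Hcom c e), Hn in H0 by i01. lra.
Qed.

Lemma M1 U e c z : is_uninorm U e -> 0 < e < 1 -> LC U 0 e -> idempotent U c -> e <= c ->
  0 <= z <= e -> U c z = z \/ U c z = c.
Proof.
  intros HU He HL [Hc0 Hcc] Hce Hz.
  pose proof HU as (He0&Hcl&Hcom&Has&Hm&Hn).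
  set (y := U c z).
  assert (Hy1 : z <= y). { assert (U e z <= U c z) by (apply (mono1 U e); auto; i01).
    rewrite Hn in H by i01. auto. }
  assert (Hy2 : y <= c). { assert (U c z <= U c e) by (apply (mono2 U e); auto; i01).
    rewrite (Hcom c e), Hn in H by i01. auto. }
  assert (Hcy : U c y = y). { unfold y. rewrite (Has c c z) by i01. rewrite Hcc. auto. }
  destruct (Rle_dec y e) as [Hye|Hye].
  - left.
    assert (H0 : U y 0 = 0).
    { assert (U y 0 <= U e 0) by (apply (mono1 U e); auto; i01).
      rewrite Hn in H by i01. pose proof (Hcl y 0 ltac:(i01) ltac:(i01)). i01. }
    assert (H1 : U y e = y) by (rewrite Hcom, Hn; auto; i01).
    destruct (ivt_loc (U y) 0 e z ltac:(lra) (LC_sec U 0 e y ltac:(i01) HL)) as [w [Hw Hw']].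
    { rewrite H0, H1. lra. }
    assert (E: U c (U y w) = U y w) by (rewrite Has, Hcy; auto; i01). rewrite Hw' in E. exact E.
  - right.
    assert (U c e <= U c y) by (apply (mono2 U e); auto; i01).
    rewrite (Hcom c e), Hn in H by i01. fold y. lra.
Qed.
Lemma main_low U e c a b : is_uninorm U e -> 0<e<1 -> LC U 0 e -> idempotent U c ->
  idempotent U a -> idempotent U b -> (forall x, a<x<b -> U x x <> x) -> a < b -> b <= e ->
 (forall x, a<x<b -> U c x = x) \/ (forall x, a<x<b -> U c x = c).
Proof.
  intros HU He HL Hc Ha Hb Hni Hab Hbe.
  pose proof HU as (He0&Hcl&Hcom&Has&Hm&Hn).
  destruct Hc as [Hc0 Hcc]. destruct Ha as [Ha0 Haa]. destruct Hb as [Hb0 Hbb].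
  assert (Hcab : c <= a \/ b <= c).
  { destruct (Rle_dec c a); [left; auto|]. destruct (Rle_dec b c); [right; auto|].
    exfalso. apply (Hni c); auto; lra. }
  destruct (Rle_dec c e) as [Hce|Hce].
  - destruct Hcab as [Hca|Hcb].
    + right. intros x Hx. rewrite (T1 U e c x HU He HL (conj Hc0 Hcc) ltac:(i01) ltac:(i01)).
      apply Rmin_right; lra.
    + left. intros x Hx. rewrite (T1 U e c x HU He HL (conj Hc0 Hcc) ltac:(i01) ltac:(i01)).
      apply Rmin_left; lra.
  - destruct (classic (forall x, a<x<b -> U c x = x)) as [H|H]; [left; auto|right].
    apply not_all_ex_not in H. destruct H as [x2 H].
    apply imply_to_and in H. destruct H as [Hx2 Hx2'].
    assert (E2 : U c x2 = c).
    { destruct (M1 U e c x2 HU He HL (conj Hc0 Hcc) ltac:(i01) ltac:(i01)) as [E|E]; auto. contradiction. }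
    intros x1 Hx1.
    destruct (M1 U e c x1 HU He HL (conj Hc0 Hcc) ltac:(i01) ltac:(i01)) as [E1|E1]; auto.
    exfalso.
    assert (Hx12 : x1 < x2).
    { destruct (Rlt_dec x1 x2); auto. exfalso.
      assert (U c x2 <= U c x1) by (apply (mono2 U e); auto; i01). lra. }
    set (N := fun t => a<t<b /\ U c t = t).
    destruct (completeness N) as [s [Hs1 Hs2]].
    { exists b. intros t [Ht _]. lra. }
    { exists x1. split; auto. }
    assert (Hx1s : x1 <= s) by (apply Hs1; split; auto).
    assert (Hsx2 : s <= x2).
    { apply Hs2. intros t [Ht Ht']. destruct (Rle_dec t x2); auto. exfalso.
      assert (U c x2 <= U c t) by (apply (mono2 U e); auto; i01). lra. }
    assert (Hss : U s s < s).
    { assert (U s s <= U s e) by (apply (mono2 U e); auto; i01).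
      rewrite (Hcom s e), Hn in H by i01.
      destruct (Rle_lt_or_eq_dec _ _ H); auto. exfalso. apply (Hni s); auto; lra. }
    destruct (LC_diag U 0 e HL s ltac:(i01) (s - U s s) ltac:(lra)) as [d [Hd Hd']].
    set (t := Rmin (s + d/2) ((s+b)/2)).
    assert (Ht : s < t < b /\ t - s < d).
    { unfold t, Rmin. destruct Rle_dec; lra. }
    assert (Htt : U t t < s).
    { assert (Rabs (U t t - U s s) < s - U s s).
      { apply Hd'. i01. rewrite Rabs_right; lra. }
      apply Rabs_def2 in H. lra. }
    assert (Ect : U c t = c).
    { destruct (M1 U e c t HU He HL (conj Hc0 Hcc) ltac:(i01) ltac:(i01)) as [E|E]; auto.
      exfalso. assert (t <= s) by (apply Hs1; split; auto; lra). lra. }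
    assert (Ep : U c (U t t) = c).
    { rewrite Has by i01. rewrite Ect. auto. }
    assert (Hpa : a <= U t t).
    { assert (U a a <= U t a) by (apply (mono1 U e); auto; i01).
      assert (U t a <= U t t) by (apply (mono2 U e); auto; i01). lra. }
    destruct (Rle_lt_or_eq_dec _ _ Hpa) as [Hpa'|Hpa'].
    + destruct (classic (exists n, N n /\ U t t < n)) as [[n [[Hn1 Hn2] Hn3]]|Hno].
      * assert (U c (U t t) <= U c n) by (apply (mono2 U e); auto; i01). lra.
      * assert (s <= U t t).
        { apply Hs2. intros n Hn'. destruct (Rle_dec n (U t t)); auto.
          exfalso. apply Hno. exists n. split; auto. lra. }
        lra.
    + rewrite <- Hpa' in Ep.
      assert (U c a <= U c x1) by (apply (mono2 U e); auto; i01). lra.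
Qed.
Lemma scl k A B r : 0 < k -> Rabs (A/k - B/k) < r -> Rabs (A - B) < r*k.
Proof.
  intros Hk H. replace (A/k - B/k) with ((A-B) * /k) in H by (field; lra).
  rewrite Rabs_mult, (Rabs_right (/k)) in H by (apply Rle_ge, Rlt_le, Rinv_0_lt_compat; lra).
  apply (Rmult_lt_compat_r k) in H; auto.
  rewrite Rmult_assoc, Rinv_l, Rmult_1_r in H; lra.
Qed.

Lemma scl2 k A B r : 0 < k -> Rabs (A - B) < r*k -> Rabs (A/k - B/k) < r.
Proof.
  intros Hk H. replace (A/k - B/k) with ((A-B) * /k) by (field; lra).
  rewrite Rabs_mult, (Rabs_right (/k)) by (apply Rle_ge, Rlt_le, Rinv_0_lt_compat; lra).
  apply (Rmult_lt_reg_r k); auto.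
  rewrite Rmult_assoc, Rinv_l, Rmult_1_r; lra.
Qed.

Lemma LC_low U e : in_classU U e -> 0<e<1 -> LC U 0 e.
Proof.
  intros [HT _] He p q Hp Hq eps Heps.
  destruct (HT (p/e) (q/e)) with (eps := eps/e) as [d [Hd Hd']].
  { split. apply Rmult_le_pos; [lra|left; apply Rinv_0_lt_compat; lra].
    apply Rmult_le_reg_r with e; [lra|]. unfold Rdiv. rewrite Rmult_assoc, Rinv_l; lra. }
  { split. apply Rmult_le_pos; [lra|left; apply Rinv_0_lt_compat; lra].
    apply Rmult_le_reg_r with e; [lra|]. unfold Rdiv. rewrite Rmult_assoc, Rinv_l; lra. }
  { apply Rdiv_lt_0_compat; lra. }
  exists (d*e). split; [nra|]. intros p' q' Hp' Hq' H1 H2.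
  specialize (Hd' (p'/e) (q'/e)).
  unfold underlying_tnorm in Hd'.
  replace (e * (p'/e)) with p' in Hd' by (field; lra).
  replace (e * (q'/e)) with q' in Hd' by (field; lra).
  replace (e * (p/e)) with p in Hd' by (field; lra).
  replace (e * (q/e)) with q in Hd' by (field; lra).
  replace eps with (eps/e*e) by (field; lra).
  apply scl; [lra|]. apply Hd'.
  { split. apply Rmult_le_pos; [lra|left; apply Rinv_0_lt_compat; lra].
    apply Rmult_le_reg_r with e; [lra|]. unfold Rdiv. rewrite Rmult_assoc, Rinv_l; lra. }
  { split. apply Rmult_le_pos; [lra|left; apply Rinv_0_lt_compat; lra].
    apply Rmult_le_reg_r with e; [lra|]. unfold Rdiv. rewrite Rmult_assoc, Rinv_l; lra. }
  apply scl2; lra. apply scl2; lra.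
Qed.

Lemma in01_sc e p : 0 < e < 1 -> e <= p <= 1 -> in01 ((p - e)/(1-e)).
Proof.
  intros He Hp. split. apply Rmult_le_pos; [lra|left; apply Rinv_0_lt_compat; lra].
  apply Rmult_le_reg_r with (1-e); [lra|]. unfold Rdiv. rewrite Rmult_assoc, Rinv_l; lra.
Qed.

Lemma LC_high U e : in_classU U e -> 0<e<1 -> LC U e 1.
Proof.
  intros [_ HC] He p q Hp Hq eps Heps.
  destruct (HC ((p-e)/(1-e)) ((q-e)/(1-e))) with (eps := eps/(1-e)) as [d [Hd Hd']];
    try (apply in01_sc; lra).
  { apply Rdiv_lt_0_compat; lra. }
  exists (d*(1-e)). split; [nra|]. intros p' q' Hp' Hq' H1 H2.
  specialize (Hd' ((p'-e)/(1-e)) ((q'-e)/(1-e)) ltac:(apply in01_sc; lra) ltac:(apply in01_sc; lra)).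
  unfold underlying_tconorm in Hd'.
  replace (e + (1-e) * ((p'-e)/(1-e))) with p' in Hd' by (field; lra).
  replace (e + (1-e) * ((q'-e)/(1-e))) with q' in Hd' by (field; lra).
  replace (e + (1-e) * ((p-e)/(1-e))) with p in Hd' by (field; lra).
  replace (e + (1-e) * ((q-e)/(1-e))) with q in Hd' by (field; lra).
  replace eps with (eps/(1-e)*(1-e)) by (field; lra).
  replace (U p' q' - U p q) with ((U p' q' - e) - (U p q - e)) by ring.
  apply scl; [lra|]. apply Hd'.
  apply scl2; [lra|]. replace (p' - e - (p - e)) with (p'-p) by ring. lra.
  apply scl2; [lra|]. replace (q' - e - (q - e)) with (q'-q) by ring. lra.
Qed.
Definition dualU (U : R -> R -> R) := fun x y => 1 - U (1-x) (1-y).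

Lemma in01_neg x : in01 x -> in01 (1-x).
Proof. i01. Qed.

Lemma dual_uni U e : is_uninorm U e -> is_uninorm (dualU U) (1-e).
Proof.
  intros (He0&Hcl&Hcom&Has&Hm&Hn). unfold dualU.
  split; [i01|]. split; [|split; [|split; [|split]]].
  - intros x y Hx Hy. apply in01_neg, Hcl; apply in01_neg; auto.
  - intros x y Hx Hy. rewrite Hcom; auto; apply in01_neg; auto.
  - intros x y z Hx Hy Hz. replace (1 - (1 - U (1-y) (1-z))) with (U (1-y) (1-z)) by ring.
    replace (1 - (1 - U (1-x) (1-y))) with (U (1-x) (1-y)) by ring.
    rewrite Has; auto; apply in01_neg; auto.
  - intros x1 x2 y H1 H2 Hy Hle. assert (U (1-x2) (1-y) <= U (1-x1) (1-y)).
    { apply Hm; try apply in01_neg; auto. lra. } lra.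
  - intros x Hx. replace (1 - (1-e)) with e by ring. rewrite Hn by (apply in01_neg; auto). ring.
Qed.

Lemma dual_LC U e : LC U e 1 -> LC (dualU U) 0 (1-e).
Proof.
  intros H p q Hp Hq eps Heps. unfold dualU.
  destruct (H (1-p) (1-q) ltac:(lra) ltac:(lra) eps Heps) as [d [Hd Hd']].
  exists d. split; auto. intros p' q' Hp' Hq' H1 H2.
  replace (1 - U (1-p') (1-q') - (1 - U (1-p) (1-q))) with (- (U (1-p') (1-q') - U (1-p) (1-q))) by ring.
  rewrite Rabs_Ropp. apply Hd'; try lra.
  replace (1-p' - (1-p)) with (-(p'-p)) by ring. rewrite Rabs_Ropp; auto.
  replace (1-q' - (1-q)) with (-(q'-q)) by ring. rewrite Rabs_Ropp; auto.
Qed.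

Lemma dual_idem U x : idempotent U x -> idempotent (dualU U) (1-x).
Proof. intros [H1 H2]. split. apply in01_neg; auto. unfold dualU.
  replace (1-(1-x)) with x by ring. rewrite H2. ring. Qed.

Lemma main_high U e c a b : is_uninorm U e -> 0<e<1 -> LC U e 1 -> idempotent U c ->
  idempotent U a -> idempotent U b -> (forall x, a<x<b -> U x x <> x) -> a < b -> e <= a ->
 (forall x, a<x<b -> U c x = x) \/ (forall x, a<x<b -> U c x = c).
Proof.
  intros HU He HL Hc Ha Hb Hni Hab Hea.
  destruct (main_low (dualU U) (1-e) (1-c) (1-b) (1-a) (dual_uni U e HU) ltac:(lra)
    (dual_LC U e HL) (dual_idem U c Hc) (dual_idem U b Hb) (dual_idem U a Ha)) as [H|H].
  { intros x Hx E. apply (Hni (1-x)); [lra|]. unfold dualU in E.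
    replace (1-(1-x)) with x in E by ring. lra. }
  lra. lra.
  - left. intros x Hx. specialize (H (1-x) ltac:(lra)). unfold dualU in H.
    replace (1-(1-x)) with x in H by ring. replace (1-(1-c)) with c in H by ring. lra.
  - right. intros x Hx. specialize (H (1-x) ltac:(lra)). unfold dualU in H.
    replace (1-(1-x)) with x in H by ring. replace (1-(1-c)) with c in H by ring. lra.
Qed.
Lemma XC_all U e c a b : is_uninorm U e -> 0 < e < 1 -> in_classU U e ->
  idempotent U c -> idempotent U a -> idempotent U b ->
  (forall x, a < x < b -> U x x <> x) -> a < b ->
  (forall x, a<x<b -> U c x = x) \/ (forall x, a<x<b -> U c x = c).
Proof.
  intros HU He HC Hc Ha Hb Hni Hab.
  pose proof HU as (He0&Hcl&Hcom&Has&Hm&Hn).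
  destruct (Rle_dec b e) as [Hbe|Hbe].
  - apply (main_low U e); auto. apply LC_low; auto.
  - destruct (Rle_dec e a) as [Hea|Hea].
    + apply (main_high U e); auto. apply LC_high; auto.
    + exfalso. apply (Hni e). lra. apply Hn. i01.
Qed.

Lemma conv (U : R -> R -> R) c a b (P : R -> Prop) : (forall x, P x -> a <= x <= b) -> (c <= a \/ b <= c) ->
  ((forall x, P x -> U c x = x) \/ (forall x, P x -> U c x = c)) ->
  ((forall x, P x -> U c x = Rmin x c) \/ (forall x, P x -> U c x = Rmax x c)).
Proof.
  intros HP Hc [H|H]; destruct Hc as [Hc|Hc].
  - right. intros x Hx. rewrite H by auto. specialize (HP x Hx). rewrite Rmax_left; lra.
  - left. intros x Hx. rewrite H by auto. specialize (HP x Hx). rewrite Rmin_left; lra.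
  - left. intros x Hx. rewrite H by auto. specialize (HP x Hx). rewrite Rmin_right; lra.
  - right. intros x Hx. rewrite H by auto. specialize (HP x Hx). rewrite Rmax_right; lra.
Qed.

Lemma c_out U c a b : idempotent U c -> (forall x, a < x < b -> U x x <> x) -> c <= a \/ b <= c.
Proof.
  intros [_ Hcc] Hni. destruct (Rle_dec c a); [left; auto|]. destruct (Rle_dec b c); [right; auto|].
  exfalso. apply (Hni c); auto; lra.
Qed.

Theorem lemma7 (U : R -> R -> R) (e c a b : R) :
  is_uninorm U e -> 0 < e < 1 -> in_classU U e ->
  idempotent U c -> idempotent U a -> idempotent U b ->
  (forall x, a < x < b -> U x x <> x) ->
  ((forall x, a < x < b -> U c x = Rmin x c) \/
   (forall x, a < x < b -> U c x = Rmax x c)) /\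
  (nilpotent_tnorm_on U a b ->
     (forall x, a <= x < b -> U c x = Rmin x c) \/
     (forall x, a <= x < b -> U c x = Rmax x c)) /\
  (nilpotent_tconorm_on U a b ->
     (forall x, a < x <= b -> U c x = Rmin x c) \/
     (forall x, a < x <= b -> U c x = Rmax x c)).
Proof.
  intros HU He HC Hc Ha Hb Hni.
  pose proof HU as (He0&Hcl&Hcom&Has&Hm&Hn).
  pose proof (c_out U c a b Hc Hni) as Hco.
  pose proof Hc as [Hc0 Hcc]. pose proof Ha as [Ha0 Haa]. pose proof Hb as [Hb0 Hbb].
  split; [|split].
  - destruct (Rlt_dec a b) as [Hab|Hab].
    + apply conv with a b; auto. intros; lra. apply (XC_all U e); auto.
    + left. intros; lra.
  - intros [Hab [_ [_ [_ [x [y [Hx [Hy Hxy]]]]]]]].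
    unfold transport in Hxy.
    set (x' := a + (b-a)*x) in *. set (y' := a + (b-a)*y) in *.
    assert (Hx' : a < x' < b) by (unfold x'; split; nra).
    assert (Hy' : a < y' < b) by (unfold y'; split; nra).
    assert (Exy : U x' y' = a).
    { unfold Rdiv in Hxy. apply Rmult_integral in Hxy. destruct Hxy as [H|H]. lra.
      exfalso. apply Rinv_neq_0_compat in H; auto. lra. }
    apply conv with a b; auto. intros; lra.
    destruct (XC_all U e c a b) as [H|H]; auto.
    + left. intros z [Hz1 Hz2]. destruct (Rle_lt_or_eq_dec _ _ Hz1) as [Hz|Hz]; [apply H; lra|].
      subst z. rewrite <- Exy at 1. rewrite Has by i01. rewrite (H x') by auto. auto.
    + right. intros z [Hz1 Hz2]. destruct (Rle_lt_or_eq_dec _ _ Hz1) as [Hz|Hz]; [apply H; lra|].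
      subst z. rewrite <- Exy. rewrite Has by i01. rewrite (H x') by auto. apply H; auto.
  - intros [Hab [_ [_ [_ [x [y [Hx [Hy Hxy]]]]]]]].
    unfold transport in Hxy.
    set (x' := a + (b-a)*x) in *. set (y' := a + (b-a)*y) in *.
    assert (Hx' : a < x' < b) by (unfold x'; split; nra).
    assert (Hy' : a < y' < b) by (unfold y'; split; nra).
    assert (Exy : U x' y' = b).
    { apply (Rmult_eq_compat_r (b-a)) in Hxy. unfold Rdiv in Hxy.
      rewrite Rmult_assoc, Rinv_l, Rmult_1_r in Hxy by lra. lra. }
    apply conv with a b; auto. intros; lra.
    destruct (XC_all U e c a b) as [H|H]; auto.
    + left. intros z [Hz1 Hz2]. destruct (Rle_lt_or_eq_dec _ _ Hz2) as [Hz|Hz]; [apply H; lra|].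
      subst z. rewrite <- Exy at 1. rewrite Has by i01. rewrite (H x') by auto. auto.
    + right. intros z [Hz1 Hz2]. destruct (Rle_lt_or_eq_dec _ _ Hz2) as [Hz|Hz]; [apply H; lra|].
      subst z. rewrite <- Exy. rewrite Has by i01. rewrite (H x') by auto. apply H; auto.
Qed.
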